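(* Fix integers $2\le k\le n$, let $M=\lceil n/k\rceil$ and $r=n-(M-1)k$, and consider the $k$-grouped $(k,n)$ random-grid sharing of a secret bit described in the context. Let $\vec\lambda=(\lambda_1,\ldots,\lambda_M)$ be a valid partition and suppose $\lambda_j$ shadow images are selected from the $j$-th group for each $j$. Let $x$ be an integer with $\lambda_M\le x\le k$ and let $B\in\{0,1\}^{1\times x}$ be any row vector of Hamming weight $\lambda_M$. Then $$\Pr(\#C(\vec\lambda)=x)=\frac{\binom{k-\lambda_M}{x-\lambda_M}\,\bigl|\mathcal{E}^{\vec\lambda}_x(B)\bigr|}{\prod_{j=1}^{M-1}\binom{k}{\lambda_j}}.$$
   Context: Sharing of a secret bit $s$: $b_1,\ldots,b_{k-1}$ are independent uniform bits and $b_k=s\oplus b_1\oplus\cdots\oplus b_{k-1}$. The $n$ shares form $M$ groups; groups $1,\ldots,M-1$ have $k$ positions and group $M$ has $r$ positions. Group 1 is $(b_1,\ldots,b_k)$ (position $\delta$ carries index $\delta$). For each $j\ge2$ an independent uniformly random permutation $\sigma_j$ of $\{1,\ldots,k\}$ is drawn and position $\delta$ of group $j$ carries index $\sigma_j(\delta)$ and bit $b_{\sigma_j(\delta)}$ ($\delta\le r$ for group $M$); it is the pixel of shadow image $(j-1)k+\delta$. A valid partition is $\vec\lambda=(\lambda_1,\ldots,\lambda_M)$ of non-negative integers with $\max_j\lambda_j\le k$ and $\lambda_M\le r$. Selecting $\lambda_j$ (fixed) positions of group $j$, $C(\vec\lambda)$ is the multiset of carried indices and $\#C(\vec\lambda)$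 the number of its distinct elements; probabilities are over the random permutations. $\mathcal{E}^{\vec\lambda}_x(B)$ is the set of $M\times x$ matrices $E$ with entries in $\{0,1\}$ whose last row equals $B$, whose $i$-th row sum is $\lambda_i$ for every $i=1,\ldots,M$, and each of whose column sums is at least $1$. *)

(* Defs.v *)
From mathcomp Require Import all_boot all_order all_algebra all_fingroup.
Set Implicit Arguments. Unset Strict Implicit. Unset Printing Implicit Defensive.

Definition ngroups (n k : nat) : nat := (n + k.-1) %/ k.
Definition lastsize (n k : nat) : nat := n - (ngroups n k).-1 * k.

(* Groups are numbered 0..M-1 (paper: 1..M); positions and indices are 'I_k
   (paper: 1..k).  A draw is a family of permutations s : 'I_M -> 'S_k, with
   the permutation of group 0 (paper: group 1) forced to be the identity. *)
Definition sample_space (M k : nat) : {set {ffun 'I_M -> {perm 'I_k}}} :=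
  [set s : {ffun 'I_M -> {perm 'I_k}} | [forall j : 'I_M, (val j == 0) ==> (s j == 1%g)]].

(* P j = set of selected positions of group j; carried index of position d
   of group j is s j d.  Distinct carried indices: *)
Definition carried (M k : nat) (P : nat -> {set 'I_k}) (s : {ffun 'I_M -> {perm 'I_k}})
  : {set 'I_k} := \bigcup_(j : 'I_M) ((s j : {perm 'I_k}) @: P j).

Definition prob_numC (M k : nat) (P : nat -> {set 'I_k}) (x : nat) : rat :=
  (#|[set s in sample_space M k | #|carried P s| == x]|)%:R
  / (#|sample_space M k|)%:R.

Definition Eset (M x : nat) (lam : nat -> nat) (B : 'rV[bool]_x) : {set 'M[bool]_(M, x)} :=
  [set E : 'M[bool]_(M, x) |
     [forall i : 'I_M, (val i == M.-1) ==> (row i E == B)]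
  && [forall i : 'I_M, \sum_(c < x) (E i c : nat) == lam i]
  && [forall c : 'I_x, 1 <= \sum_(i < M) (E i c : nat)]].

(* Main.v *)
Require Import Defs.
From mathcomp Require Import all_boot all_order all_algebra all_fingroup.
From mathcomp Require Import ring.
Set Implicit Arguments. Unset Strict Implicit. Unset Printing Implicit Defensive.

Lemma card_bij_in (T1 T2 : finType) (A : {set T1}) (B : {set T2})
  (f : T1 -> T2) (g : T2 -> T1) :
  {in A &, injective f} -> {in B &, injective g} ->
  (forall a, a \in A -> f a \in B) -> (forall b, b \in B -> g b \in A) ->
  #|A| = #|B|.
Proof.
move=> fi gi fAB gBA; apply/eqP; rewrite eqn_leq.
apply/andP; split.
  rewrite -(card_in_imset fi); apply: subset_leq_card.
  by apply/subsetP => _ /imsetP[a aA ->]; auto.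
rewrite -(card_in_imset gi); apply: subset_leq_card.
by apply/subsetP => _ /imsetP[a aA ->]; auto.
Qed.

Lemma card_set_sum (T : finType) (c : pred T) :
  #|[set x | c x]| = \sum_x (c x : nat).
Proof.
rewrite -sum1_card big_mkcond; apply: eq_bigr => x _; rewrite inE; by case: (c x).
Qed.

Lemma imset_permM (T : finType) (s t : {perm T}) (A : {set T}) :
  (s * t)%g @: A = t @: (s @: A).
Proof. by rewrite -imset_comp; apply: eq_imset => y; rewrite permM. Qed.

Lemma imset_perm1 (T : finType) (A : {set T}) : (1%g : {perm T}) @: A = A.
Proof. by rewrite -[RHS]imset_id; apply: eq_imset => y; rewrite perm1. Qed.

Lemma card_perm_imset (T : finType) (t : {perm T}) (A : {set T}) : #|t @: A| = #|A|.
Proof. by rewrite card_imset //; apply: perm_inj. Qed.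

Lemma perm_trans_set (T : finType) (A B : {set T}) :
  #|A| = #|B| -> exists t : {perm T}, t @: A = B.
Proof.
move=> hAB.
pose eA := enum A ++ enum (~: A). pose eB := enum B ++ enum (~: B).
have uA : uniq eA.
  rewrite cat_uniq !enum_uniq andbT /=; apply/hasPn => y.
  by rewrite !mem_enum in_setC.
have uB : uniq eB.
  rewrite cat_uniq !enum_uniq andbT /=; apply/hasPn => y.
  by rewrite !mem_enum in_setC.
have mA : forall y, y \in eA by move=> y; rewrite mem_cat !mem_enum in_setC orbN.
have sAB : size eA = size eB.
  by rewrite !size_cat -!cardE !cardsC.
pose f y := nth y eB (index y eA).
have fi : injective f.
  move=> y z; rewrite /f => h.
  have iy : index y eA < size eB by rewrite -sAB index_mem.
  have iz : index z eA < size eB by rewrite -sAB index_mem.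
  move: h; rewrite (set_nth_default z y iy) => /eqP.
  rewrite nth_uniq // => /eqP h.
  by rewrite -(nth_index y (mA y)) h nth_index.
exists (perm fi).
apply/eqP; rewrite eqEcard card_perm_imset hAB leqnn andbT.
apply/subsetP => _ /imsetP[y yA ->]; rewrite permE /f.
have iy : index y eA < #|A|.
  by rewrite /eA index_cat mem_enum yA cardE index_mem mem_enum.
rewrite nth_cat -cardE -hAB iy.
have : nth y (enum B) (index y eA) \in enum B by rewrite mem_nth // -cardE -hAB.
by rewrite mem_enum.
Qed.

Definition fib (n : nat) (P Q : {set 'I_n}) := #|[set s : {perm 'I_n} | s @: P == Q]|.

Lemma fib_eq n (P Q : {set 'I_n}) : #|Q| = #|P| -> fib P Q = fib P P.
Proof.
move=> hQ; have [t ht] := perm_trans_set (esym hQ).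
rewrite /fib; apply: (@card_bij_in _ _ _ _ (fun s => s * t^-1)%g (fun s => s * t)%g).
- by move=> a b _ _; apply: mulIg.
- by move=> a b _ _; apply: mulIg.
- move=> s; rewrite !inE imset_permM => /eqP ->; rewrite -ht -imset_permM mulgV.
  by rewrite imset_perm1.
- by move=> s; rewrite !inE imset_permM => /eqP ->; rewrite ht.
Qed.

Lemma fib0 n (P Q : {set 'I_n}) : #|Q| != #|P| -> fib P Q = 0.
Proof.
move=> h; apply/eqP; rewrite /fib cards_eq0; apply/eqP/setP => s.
rewrite inE in_set0; apply/negbTE; apply: contra h => /eqP <-.
by rewrite card_perm_imset.
Qed.

Lemma fib_sum n (P : {set 'I_n}) : fib P P * 'C(n, #|P|) = n`!.
Proof.
rewrite -card_Sn -[RHS]sum1_card (partition_big (fun s : {perm 'I_n} => s @: P) predT) //=.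
rewrite (bigID (fun Q : {set 'I_n} => #|Q| == #|P|)) /=.
rewrite [X in _ + X]big1 ?addn0; last first.
  move=> Q hQ; apply: big1 => s /eqP hs.
  by move: hQ; rewrite -hs card_perm_imset eqxx.
transitivity (\sum_(Q : {set 'I_n} | #|Q| == #|P|) fib P P).
  rewrite sum_nat_const mulnC; congr (_ * _).
  by rewrite -[n in 'C(n, _)]card_ord -card_draws; apply: eq_card => Q; rewrite inE.
apply: eq_bigr => Q /eqP hQ; rewrite -(fib_eq hQ) /fib -sum1_card.
by apply: eq_bigl => s; rewrite inE.
Qed.
Lemma imset_bigcup (I T1 T2 : finType) (f : T1 -> T2) (A : I -> {set T1}) :
  f @: (\bigcup_(i : I) A i) = \bigcup_(i : I) f @: A i.
Proof.
apply/setP => y; apply/imsetP/bigcupP.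
  by move=> [x /bigcupP[i _ xA] ->]; exists i => //; apply: imset_f.
by move=> [i _ /imsetP[x xA ->]]; exists x => //; apply/bigcupP; exists i.
Qed.

Lemma carried_shift M k (P : nat -> {set 'I_k}) (s : {ffun 'I_M -> {perm 'I_k}}) t :
  carried P [ffun j => (s j * t)%g] = t @: carried P s.
Proof.
by rewrite /carried imset_bigcup; apply: eq_bigr => j _; rewrite ffunE imset_permM.
Qed.

Lemma shift_count M k (P : nat -> {set 'I_k}) (g : nat -> bool) : 0 < M ->
  k`! * #|[set s in sample_space M k | g #|carried P s|]| =
  #|[set s : {ffun 'I_M -> {perm 'I_k}} | g #|carried P s|]|.
Proof.
move=> M0; pose j0 := Ordinal M0.
have SS1 : forall s, s \in sample_space M k -> s j0 = 1%g.
  by move=> s; rewrite inE => /forallP /(_ j0) /implyP /(_ isT) /eqP.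
rewrite -card_Sn -cardsT -cardsX.
apply: (@card_bij_in _ _ _ _ (fun p : {perm 'I_k} * {ffun 'I_M -> {perm 'I_k}} => [ffun j => (p.2 j * p.1)%g])
   (fun s => (s j0, [ffun j => (s j * (s j0)^-1)%g]))).
- move=> [t s] [t' s'] /setXP[_ hs] /setXP[_ hs'] /= h.
  move: hs hs' => /setIdP[/SS1 hs _] /setIdP[/SS1 hs' _].
  have h0 := congr1 (fun f : {ffun 'I_M -> {perm 'I_k}} => f j0) h; rewrite /= !ffunE hs hs' !mul1g in h0.
  subst t'; congr pair; apply/ffunP => j.
  by have := congr1 (fun f : {ffun 'I_M -> {perm 'I_k}} => f j) h; rewrite /= !ffunE => /mulIg.
- move=> s s' _ _ [h0 h]; apply/ffunP => j.
  by have := congr1 (fun f : {ffun 'I_M -> {perm 'I_k}} => f j) h; rewrite /= !ffunE h0 => /mulIg.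
- move=> [t s] /setXP[_] /setIdP[_ hg].
  rewrite inE /= (carried_shift P s t) card_perm_imset //.
- move=> s; rewrite inE => hg; apply/setXP; split; first by rewrite inE.
  rewrite !inE carried_shift card_perm_imset hg andbT.
  apply/forallP => j; apply/implyP => /eqP hj; rewrite ffunE.
  have -> : j = j0 by apply: val_inj.
  by rewrite mulgV.
Qed.

Lemma prod_nat_bool (I : finType) (b : I -> bool) :
  \prod_(i : I) (b i : nat) = [forall i, b i].
Proof.
case: (boolP [forall i, b i]) => h.
  by apply: big1 => i _; move/forallP: h => ->.
move/forallPn: h => [i hi]; by rewrite (bigD1 i) //= (negbTE hi).
Qed.

Definition Nset M k (lam : nat -> nat) x :=
  [set R : {ffun 'I_M -> {set 'I_k}} |
     [forall j : 'I_M, #|R j| == lam j] && (#|\bigcup_(j : 'I_M) R j| == x)].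

Lemma carried_ffun M k (P : nat -> {set 'I_k}) (s : {ffun 'I_M -> {perm 'I_k}}) :
  carried P s = \bigcup_(j : 'I_M) [ffun j => s j @: P j] j.
Proof. by rewrite /carried; apply: eq_bigr => j _; rewrite ffunE. Qed.

Lemma countF M k (P : nat -> {set 'I_k}) (lam : nat -> nat) x :
  (forall j : 'I_M, #|P j| = lam j) ->
  #|[set s : {ffun 'I_M -> {perm 'I_k}} | #|carried P s| == x]| =
  (\prod_(j < M) fib (P j) (P j)) * #|Nset M k lam x|.
Proof.
move=> hP.
rewrite card_set_sum (partition_big (fun s : {ffun 'I_M -> {perm 'I_k}} =>
  [ffun j => s j @: P j]) predT) //=.
rewrite /Nset card_set_sum big_distrr /=; apply: eq_bigr => R _.
transitivity (\sum_(s : {ffun 'I_M -> {perm 'I_k}} | [ffun j => s j @: P j] == R)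
               (#|\bigcup_(j : 'I_M) R j| == x : nat)).
  by apply: eq_bigr => s /eqP <-; rewrite carried_ffun.
case hx: (#|\bigcup_(j : 'I_M) R j| == x); last first.
  by rewrite andbF muln0 big1.
rewrite andbT /=.
have -> : \sum_(s : {ffun 'I_M -> {perm 'I_k}} | [ffun j => s j @: P j] == R) 1 = \prod_(j < M) fib (P j) (R j).
  rewrite /fib; under [RHS]eq_bigr do rewrite card_set_sum.
  rewrite bigA_distr_bigA /= big_mkcond; apply: eq_bigr => s _.
  rewrite prod_nat_bool.
  have -> : ([ffun j => s j @: P j] == R) = [forall j, s j @: P j == R j].
    apply/eqP/forallP => [<- j|h]; first by rewrite ffunE.
    by apply/ffunP => j; rewrite ffunE; apply/eqP.
  by case: [forall j, _].
case: (boolP [forall j, #|R j| == lam j]) => h.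
  rewrite /= muln1; apply: eq_bigr => j _; apply: fib_eq.
  by move/forallP: h => /(_ j) /eqP ->.
move/forallPn: h => [j hj]; rewrite /= muln0 (bigD1 j) //= fib0 //.
by rewrite hP.
Qed.

Definition Cov M x (lam : nat -> nat) :=
  [set R : {ffun 'I_M -> {set 'I_x}} |
     [forall j : 'I_M, #|R j| == lam j] && (\bigcup_(j : 'I_M) R j == setT)].

Lemma imset_preim (T1 T2 : finType) (f : T1 -> T2) (A : {set T2}) :
  A \subset f @: setT -> f @: (f @^-1: A) = A.
Proof.
move=> sA; apply/setP => y; apply/imsetP/idP.
  by move=> [c]; rewrite inE => cA ->.
move=> yA; have /imsetP[c _ hc] := subsetP sA y yA.
by exists c => //; rewrite inE -hc.
Qed.

Lemma bigcup_ffun (I T1 T : finType) (F : I -> T1 -> {set T}) (R : {ffun I -> T1}) :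
  \bigcup_(j : I) [ffun j => F j (R j)] j = \bigcup_(j : I) F j (R j).
Proof. by apply: eq_bigr => j _; rewrite ffunE. Qed.

Lemma fiber2 M k x (lam : nat -> nat) (U : {set 'I_k}) : #|U| = x ->
  #|[set R : {ffun 'I_M -> {set 'I_k}} |
      [forall j : 'I_M, #|R j| == lam j] && (\bigcup_(j : 'I_M) R j == U)]|
  = #|Cov M x lam|.
Proof.
move=> hU.
pose h (c : 'I_x) : 'I_k := enum_val (cast_ord (esym hU) c).
have hinj : injective h.
  by move=> a b /enum_val_inj /cast_ord_inj.
have himg : h @: setT = U.
  apply/eqP; rewrite eqEcard card_imset // cardsT card_ord hU leqnn andbT.
  by apply/subsetP => _ /imsetP[c _ ->]; apply: enum_valP.
have sub : forall R : {ffun 'I_M -> {set 'I_k}}, \bigcup_(j : 'I_M) R j == U ->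
   forall j, R j \subset h @: setT.
  by move=> R /eqP hR j; rewrite himg -hR; apply: (bigcup_sup j).
apply: (@card_bij_in _ _ _ _ (fun R : {ffun 'I_M -> {set 'I_k}} => [ffun j => h @^-1: R j])
   (fun R : {ffun 'I_M -> {set 'I_x}} => [ffun j => h @: R j])).
- move=> R R'; rewrite !inE => /andP[_ hR] /andP[_ hR'] e; apply/ffunP => j.
  have := congr1 (fun F : {ffun 'I_M -> {set 'I_x}} => F j) e; rewrite /= !ffunE => e'.
  by rewrite -(imset_preim (sub R hR j)) e' imset_preim //; apply: sub.
- move=> R R' _ _ e; apply/ffunP => j.
  have := congr1 (fun F : {ffun 'I_M -> {set 'I_k}} => F j) e; rewrite /= !ffunE.
  by move/(imset_inj hinj).
- move=> R; rewrite !inE => /andP[/forallP hc hR]; apply/andP; split.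
    apply/forallP => j; rewrite ffunE.
    by rewrite -(card_imset _ hinj) imset_preim ?hc //; apply: sub.
  apply/eqP/setP => c; rewrite inE; apply/bigcupP.
  have : h c \in U by rewrite -himg; apply: imset_f.
  move/eqP: hR => <- /bigcupP[j _ hj]; exists j => //; by rewrite ffunE inE.
- move=> R; rewrite !inE => /andP[/forallP hc /eqP hR]; apply/andP; split.
    by apply/forallP => j; rewrite ffunE card_imset.
  rewrite (bigcup_ffun (fun (j : 'I_M) (S : {set 'I_x}) => h @: S)) -imset_bigcup hR himg //.
Qed.

Lemma step2 M k (lam : nat -> nat) x :
  #|Nset M k lam x| = 'C(k, x) * #|Cov M x lam|.
Proof.
rewrite -sum1_card (partition_big (fun R : {ffun 'I_M -> {set 'I_k}} =>
   \bigcup_(j : 'I_M) R j) (fun U : {set 'I_k} => #|U| == x)) /=; last first.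
  by move=> R; rewrite inE => /andP[].
transitivity (\sum_(U : {set 'I_k} | #|U| == x) 1 * #|Cov M x lam|).
  apply: eq_bigr => U /eqP hU; rewrite mul1n -(fiber2 M lam hU) sum1dep_card.
  apply: eq_card => R; rewrite !inE.
  by case: (boolP (\bigcup_(j : 'I_M) R j == U)) => [/eqP ->|];
    rewrite ?hU ?eqxx ?andbT ?andbF.
rewrite -big_distrl /= sum1dep_card; congr (_ * _).
by rewrite -[k in 'C(k, _)]card_ord -card_draws.
Qed.

Lemma cov_act M x (lam : nat -> nat) (t : {perm 'I_x}) (R : {ffun 'I_M -> {set 'I_x}}) :
  R \in Cov M x lam -> [ffun j => t @: R j] \in Cov M x lam.
Proof.
rewrite !inE => /andP[/forallP hc /eqP hR]; apply/andP; split.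
  by apply/forallP => j; rewrite ffunE card_perm_imset.
rewrite (bigcup_ffun (fun (j : 'I_M) (S : {set 'I_x}) => t @: S)) -imset_bigcup hR.
by rewrite eqEcard subsetT card_perm_imset leqnn.
Qed.

Lemma covB_eq M x (lam : nat -> nat) (jL : 'I_M) (S S' : {set 'I_x}) : #|S| = #|S'| ->
  #|[set R in Cov M x lam | R jL == S]| = #|[set R in Cov M x lam | R jL == S']|.
Proof.
move=> hS; have [t ht] := perm_trans_set hS.
have inj : forall u : {perm 'I_x}, injective (fun R : {ffun 'I_M -> {set 'I_x}} => [ffun j => u @: R j]).
  move=> u R R' e; apply/ffunP => j.
  have := congr1 (fun F : {ffun 'I_M -> {set 'I_x}} => F j) e; rewrite /= !ffunE.
  by move/(imset_inj (@perm_inj _ u)).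
apply: (@card_bij_in _ _ _ _ (fun R : {ffun 'I_M -> {set 'I_x}} => [ffun j => t @: R j])
   (fun R : {ffun 'I_M -> {set 'I_x}} => [ffun j => t^-1%g @: R j])).
- by move=> R R' _ _; apply: inj.
- by move=> R R' _ _; apply: inj.
- move=> R /setIdP[hR /eqP e]; apply/setIdP; split; first exact: cov_act.
  by rewrite ffunE e ht.
- move=> R /setIdP[hR /eqP e]; apply/setIdP; split; first exact: cov_act.
  by rewrite ffunE e -ht -imset_permM mulgV imset_perm1.
Qed.

Lemma step3 M x (lam : nat -> nat) (jL : 'I_M) (S0 : {set 'I_x}) : #|S0| = lam jL ->
  #|Cov M x lam| = 'C(x, lam jL) * #|[set R in Cov M x lam | R jL == S0]|.
Proof.
move=> hS0.
rewrite -sum1_card (partition_big (fun R : {ffun 'I_M -> {set 'I_x}} => R jL)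
   (fun S : {set 'I_x} => #|S| == lam jL)) /=; last first.
  by move=> R; rewrite inE => /andP[/forallP /(_ jL)].
transitivity (\sum_(S : {set 'I_x} | #|S| == lam jL) 1 * #|[set R in Cov M x lam | R jL == S0]|).
  apply: eq_bigr => S /eqP hS; rewrite mul1n -(@covB_eq _ _ _ _ S) ?hS //.
  rewrite sum1dep_card; apply: eq_card => R; by rewrite !inE.
rewrite -big_distrl /= sum1dep_card; congr (_ * _).
by rewrite -[x in 'C(x, _)]card_ord -card_draws.
Qed.

Lemma sum_in_card (T : finType) (A : {set T}) : \sum_(c : T) ((c \in A) : nat) = #|A|.
Proof.
by rewrite -[RHS]sum1_card [RHS]big_mkcond; apply: eq_bigr => c _; case: (c \in A).
Qed.

Lemma pos_sum_bool (I : finType) (b : I -> bool) :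
  (0 < \sum_i (b i : nat)) = [exists i, b i].
Proof.
rewrite lt0n sum_nat_eq0 negb_forall; apply: eq_existsb => i; by case: (b i).
Qed.

Lemma step4 L x (lam : nat -> nat) (B : 'rV[bool]_x) :
  #|[set R in Cov L.+1 x lam | R ord_max == [set c | B ord0 c]]| = #|Eset L.+1 lam B|.
Proof.
apply: (@card_bij_in _ _ _ _
   (fun R : {ffun 'I_L.+1 -> {set 'I_x}} => (\matrix_(i, c) (c \in R i))%R)
   (fun E : 'M[bool]_(L.+1, x) => [ffun i => [set c | E i c]])).
- move=> R R' _ _ e; apply/ffunP => i; apply/setP => c.
  by have := congr1 (fun E : 'M[bool]_(L.+1, x) => E i c) e; rewrite /= !mxE.
- move=> E E' _ _ e; apply/matrixP => i c.
  by have := congr1 (fun F : {ffun 'I_L.+1 -> {set 'I_x}} => c \in F i) e;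
    rewrite /= !ffunE !inE.
- move=> R /setIdP[]; rewrite inE => /andP[/forallP hc /eqP hR] /eqP hL.
  rewrite inE; apply/andP; split; [apply/andP; split|].
  + apply/forallP => i; apply/implyP => /eqP hi.
    have -> : i = ord_max by apply: val_inj.
    by apply/eqP/rowP => c; rewrite !mxE hL inE.
  + apply/forallP => i; rewrite -(eqP (hc i)).
    by rewrite -sum_in_card; apply/eqP; apply: eq_bigr => c _; rewrite mxE.
  + apply/forallP => c.
    rewrite (eq_bigr (fun i => (c \in R i) : nat)); last by move=> i _; rewrite mxE.
    rewrite pos_sum_bool.
    have : c \in \bigcup_(j : 'I_L.+1) R j by rewrite hR inE.
    by case/bigcupP => i _ hi; apply/existsP; exists i.
- move=> E; rewrite [E \in Eset _ _ _]inE => /andP[/andP[hrow hsum] hcol].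
  apply/setIdP; split; first (rewrite inE; apply/andP; split).
  + apply/forallP => j; rewrite ffunE card_set_sum; exact: (forallP hsum j).
  + apply/eqP/setP => c; rewrite inE; apply/bigcupP.
    have := forallP hcol c; rewrite pos_sum_bool => /existsP[i hi].
    by exists i => //; rewrite ffunE inE.
  + have := forallP hrow ord_max; rewrite /= eqxx /= => /eqP hB.
    by apply/eqP/setP => c; rewrite ffunE !inE -hB mxE.
Qed.

Lemma bin_swap k x w : w <= x -> x <= k ->
  'C(k, x) * 'C(x, w) = 'C(k, w) * 'C(k - w, x - w).
Proof.
move=> hwx hxk.
have pos : 0 < w`! * (x - w)`! * (k - x)`! by rewrite !muln_gt0 !fact_gt0.
apply/eqP; rewrite -(eqn_pmul2r pos); apply/eqP.
transitivity (('C(k, x) * (x`! * (k - x)`!))).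
  rewrite -(bin_fact hwx); ring.
rewrite (bin_fact hxk).
have e : (k - w) - (x - w) = k - x by rewrite subnBA // subnK // (leq_trans hwx).
transitivity ('C(k, w) * (w`! * ('C(k - w, x - w) * ((x - w)`! * ((k - w) - (x - w))`!)))).
  2: by rewrite e; ring.
rewrite bin_fact; last by rewrite leq_sub2r.
by rewrite bin_fact // (leq_trans hwx).
Qed.

Theorem lemma4 (n k : nat) (lam : nat -> nat) (P : nat -> {set 'I_k})
    (x : nat) (B : 'rV[bool]_x) :
  2 <= k -> k <= n ->
  (* valid partition *)
  (forall j, j < ngroups n k -> lam j <= k) ->
  lam (ngroups n k).-1 <= lastsize n k ->
  (* lam j positions selected in group j; those of the last group are < r *)
  (forall j, j < ngroups n k -> #|P j| = lam j) ->
  P (ngroups n k).-1 \subset [set d : 'I_k | d < lastsize n k] ->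
  lam (ngroups n k).-1 <= x -> x <= k ->
  \sum_(c < x) (B ord0 c : nat) = lam (ngroups n k).-1 ->
  prob_numC (ngroups n k) P x =
    ((('C(k - lam (ngroups n k).-1, x - lam (ngroups n k).-1)
       * #|Eset (ngroups n k) lam B|)%:R : rat)
    / (\prod_(0 <= j < (ngroups n k).-1) 'C(k, lam j))%:R)%R.
Proof.
move=> hk hkn hlam _ hP _ hx1 hx2 hB.
have M0 : 0 < ngroups n k.
  by rewrite /ngroups divn_gt0 ?(leq_trans _ hk) // (leq_trans hkn) // leq_addr.
move: (ngroups n k) M0 hlam hP hx1 hB => [//|L] _ hlam hP hx1 hB /=.
have hP' : forall j : 'I_L.+1, #|P j| = lam j by move=> j; apply: hP.
rewrite /prob_numC.
have hA := shift_count P (fun m => m == x) (ltn0Sn L).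
have hS := shift_count P (fun _ => true) (ltn0Sn L).
have eS : #|[set s in sample_space L.+1 k | true]| = #|sample_space L.+1 k|.
  by apply: eq_card => s; apply/idP/idP => [/setIdP[]//|h]; apply/setIdP.
have eF : #|[set s : {ffun 'I_L.+1 -> {perm 'I_k}} | true]| = k`! ^ L.+1.
  by rewrite cardsT card_ffun card_Sn card_ord.
rewrite eS eF in hS.
have hF := countF x hP'.
have hN := step2 L.+1 k lam x.
have hS0 : #|[set c | B ord0 c]| = lam (@ord_max L) by rewrite card_set_sum hB.
have hC := step3 hS0.
have hE := step4 L lam B.
have hfib : forall j : 'I_L.+1, fib (P j) (P j) * 'C(k, lam j) = k`!.
  by move=> j; rewrite -hP' fib_sum.
have hbin := bin_swap hx1 hx2.
have SSpos : 0 < #|sample_space L.+1 k|.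
  rewrite lt0n; apply/eqP => h0; move: hS; rewrite h0 muln0 => /esym/eqP.
  by rewrite expn_eq0 (negbTE (lt0n_neq0 (fact_gt0 k))).
have Dpos : 0 < \prod_(0 <= j < L) 'C(k, lam j).
  rewrite big_mkord; apply: prodn_gt0 => j; rewrite bin_gt0; apply: hlam.
  by rewrite ltnS ltnW.
apply/eqP; rewrite GRing.eqr_div; first last.
- by rewrite Num.Theory.pnatr_eq0 -lt0n.
- by rewrite Num.Theory.pnatr_eq0 -lt0n.
rewrite -!GRing.natrM Num.Theory.eqr_nat.
rewrite -(eqn_pmul2l (fact_gt0 k)) mulnA hA mulnCA hS hF hN hC hE /=.
simpl in hbin; rewrite [_ * ('C(x, _) * _)]mulnA hbin.
have e1 : \prod_(j < L.+1) fib (P j) (P j) * \prod_(j < L.+1) 'C(k, lam j) = k`! ^ L.+1.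
  by rewrite -big_split /=; under eq_bigr do rewrite hfib; rewrite prod_nat_const card_ord.
rewrite -e1 [\prod_(j < L.+1) 'C(k, lam j)]big_ord_recr /= big_mkord.
move: (\prod_(j < L.+1) fib (P j) (P j)) (\prod_(i < L) 'C(k, lam i)).
move: ('C(k, lam L)) ('C(k - lam L, x - lam L)) #|Eset L.+1 lam B| => a b c d e.
apply/eqP; ring.
Qed.
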